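(* The metric space defined on the equivalence classes of polygonal curves in $\mathbb{X}_z^{d}$ that have pairwise discrete Fréchet distance $0$, equipped with the discrete Fréchet distance, has doubling dimension $\Theta(dz)$.
   Context: A polygonal curve of complexity $z$ in $\mathbb{R}^d$ is a sequence $\langle p_1,\dots,p_z\rangle$ of points of $\mathbb{R}^d$; $\mathbb{X}_z^d$ is the set of all such curves. A traversal between curves of complexities $z$ and $\ell$ is a sequence of index pairs $(i_1,j_1),\dots,(i_t,j_t)$ with $(i_1,j_1)=(1,1)$, $(i_t,j_t)=(z,\ell)$ and, for $r<t$, $i_{r+1}-i_r\in\{0,1\}$, $j_{r+1}-j_r\in\{0,1\}$, $(i_{r+1}-i_r)+(j_{r+1}-j_r)\ge1$; the discrete Fréchet distance is $\mathbf{d}_{dF}(\langle p_i\rangle,\langle q_j\rangle)=\min_T\max_{(i,j)\in T}\|p_i-q_j\|_2$ over all traversals $T$. The doubling dimension of a metric space is the smallest $t\ge0$ such that every ball can be covered by at most $2^t$ balls of half the radius. *)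

(* Defs.v *)
From HB Require Import structures.
From mathcomp Require Import all_boot all_order all_algebra.
From mathcomp Require Import all_classical all_reals.
From mathcomp Require Import exp.
Set Implicit Arguments. Unset Strict Implicit. Unset Printing Implicit Defensive.
Import Order.TTheory GRing.Theory Num.Theory.
Local Open Scope classical_set_scope.
Local Open Scope ring_scope.

Section Frechet.
Variable R : realType.

Definition eucl_dist (d : nat) (p q : 'rV[R]_d) : R :=
  Num.sqrt (\sum_(k < d) (p ord0 k - q ord0 k) ^+ 2).

(** A polygonal curve of complexity z in R^d: z points p_0,...,p_{z-1}
    (0-indexed version of <p_1,...,p_z>). *)
Definition curve (d z : nat) := 'I_z -> 'rV[R]_d.

Definition trav_step (z l : nat) (a b : 'I_z * 'I_l) : bool :=
  [&& (a.1 <= b.1 <= a.1.+1)%N, (a.2 <= b.2 <= a.2.+1)%N & a != b].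

Definition traversal (z l : nat) (T : seq ('I_z * 'I_l)) : bool :=
  if T is x :: T' then
    [&& (x.1 == 0 :> nat), (x.2 == 0 :> nat), path (@trav_step z l) x T',
        ((last x T').1 == z.-1 :> nat) & ((last x T').2 == l.-1 :> nat)]
  else false.

Definition trav_cost (d z l : nat) (p : curve d z) (q : curve d l)
  (T : seq ('I_z * 'I_l)) : R :=
  \big[Num.max/0]_(ij <- T) eucl_dist (p ij.1) (q ij.2).

(** Discrete Frechet distance: minimum (= infimum, the set being finite)
    over traversals of the maximal matched distance. *)
Definition dF (d z l : nat) (p : curve d z) (q : curve d l) : R :=
  inf [set m | exists T, traversal T /\ m = trav_cost p q T].

(** (X, dist) satisfies the doubling condition with exponent t:
    every (closed) ball of radius r > 0 is covered by at most 2^t balls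
    of radius r/2. The doubling dimension is the least such t >= 0. *)
Definition doubling_with (X : Type) (dist : X -> X -> R) (t : R) : Prop :=
  forall (x : X) (r : R), 0 < r ->
    exists (n : nat) (cs : 'I_n -> X),
      n%:R <= 2 `^ t /\
      forall y, dist x y <= r -> exists i : 'I_n, dist (cs i) y <= r / 2.

End Frechet.

(* Main.v *)
Require Import Defs.
From HB Require Import structures.
From mathcomp Require Import all_boot all_order all_algebra.
From mathcomp Require Import all_classical all_reals.
From mathcomp Require Import exp.
From mathcomp Require Import ring lra zify.
Import Order.TTheory GRing.Theory Num.Theory.
Local Open Scope ring_scope.
Set Implicit Arguments. Unset Strict Implicit. Unset Printing Implicit Defensive.

Section Gen.
Variable R : realType.

Lemma cost_ge0 d z l (p : curve R d z) (q : curve R d l) T : 0 <= trav_cost p q T.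
Proof.
rewrite /trav_cost; elim: T => [|a T IH]; rewrite ?big_nil ?big_cons //.
by rewrite le_max IH orbT.
Qed.

Lemma cost_ge d z l (p : curve R d z) (q : curve R d l) T ij :
  ij \in T -> eucl_dist (p ij.1) (q ij.2) <= trav_cost p q T.
Proof.
rewrite /trav_cost; elim: T => //= a T IH; rewrite inE big_cons le_max.
by case/orP => [/eqP->|/IH->]; rewrite ?lexx ?orbT.
Qed.

Lemma cost_le d z l (p : curve R d z) (q : curve R d l) T rho :
  0 <= rho -> (forall ij, ij \in T -> eucl_dist (p ij.1) (q ij.2) <= rho) ->
  trav_cost p q T <= rho.
Proof.
move=> r0; rewrite /trav_cost; elim: T => [|a T IH] H; rewrite ?big_nil ?big_cons //.
rewrite ge_max H ?inE ?eqxx // IH // => ij hij; apply: H; rewrite inE hij orbT //.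
Qed.

Lemma dF_le d z l (p : curve R d z) (q : curve R d l) T :
  traversal T -> dF p q <= trav_cost p q T.
Proof.
move=> hT; have := @ge_inf R [set m | exists T, traversal T /\ m = trav_cost p q T].
apply.
  by exists 0 => m [T' [_ ->]]; apply: cost_ge0.
by exists T.
Qed.

Lemma dF_lt d z l (p : curve R d z) (q : curve R d l) a :
  (exists T : seq ('I_z * 'I_l), traversal T) -> dF p q < a ->
  exists T, traversal T /\ trav_cost p q T < a.
Proof.
move=> [T0 hT0] h.
have [m [T [hT ->]] hm] := inf_lt (ex_intro _ (trav_cost p q T0) (ex_intro _ T0 (conj hT0 erefl))) h.
by exists T.
Qed.

Lemma path_cover (T : eqType) (e : rel T) (g : T -> nat)
  (He : forall a b, e a b -> (g a <= g b <= (g a).+1)%N) x s n :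
  path e x s -> (g x <= n <= g (last x s))%N -> exists2 p, p \in x :: s & g p = n.
Proof.
elim: s x => [|y s IH] x /=.
  move=> _ h; exists x; first by rewrite inE eqxx.
  lia.
case/andP => exy ps h.
have := He _ _ exy => /andP [h1 h2].
case: (eqVneq (g x) n) => [<-|hne]; first by exists x; rewrite ?inE ?eqxx.
have [p hp <-] := IH y ps ltac:(lia).
by exists p => //; rewrite inE hp orbT.
Qed.

Lemma trav_cover2 z l (T : seq ('I_z * 'I_l)) : traversal T ->
  forall j : 'I_l, exists i : 'I_z, (i, j) \in T.
Proof.
case: T => // x T /and5P [h1 h2 hp h3 h4] j.
have := @path_cover _ (@trav_step z l) (fun a => val a.2) _ x T j hp.
case.
- by move=> a b /and3P [_ h _].
- move=> /=; have := ltn_ord j; move: h2 h4 => /eqP h2 /eqP h4; lia.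
- move=> [i j'] hin /= hj; exists i; suff <- : j' = j by [].
  exact: val_inj.
Qed.

Lemma trav_cover1 z l (T : seq ('I_z * 'I_l)) : traversal T ->
  forall i : 'I_z, exists j : 'I_l, (i, j) \in T.
Proof.
case: T => // x T /and5P [h1 h2 hp h3 h4] i.
have := @path_cover _ (@trav_step z l) (fun a => val a.1) _ x T i hp.
case.
- by move=> a b /and3P [h _ _].
- move=> /=; have := ltn_ord i; move: h1 h3 => /eqP h1 /eqP h3; lia.
- move=> [i' j] hin /= hj; exists j; suff <- : i' = i by [].
  exact: val_inj.
Qed.

Definition le2 z l : rel ('I_z * 'I_l) := fun a b => ((a.1 <= b.1)%N && (a.2 <= b.2)%N).

Arguments le2 {z l}.
Lemma le2_trans z l : transitive (@le2 z l).
Proof. move=> b a c /andP [h1 h2] /andP [h3 h4]; apply/andP; lia. Qed.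

Lemma comparable_path z l x (s : seq ('I_z * 'I_l)) : path (@le2 z l) x s ->
  forall p q, p \in x :: s -> q \in x :: s -> le2 p q || le2 q p.
Proof.
elim: s x => [|y s IH] x hp p q.
  by rewrite !inE => /eqP-> /eqP->; rewrite /le2 !leqnn.
have hall := order_path_min (@le2_trans z l) hp.
have hx : forall w, w \in x :: y :: s -> le2 x w.
  move=> w; rewrite inE => /orP [/eqP->|hw]; first by rewrite /le2 !leqnn.
  by move/allP: hall; apply.
move: hp => /= /andP [_ hp'].
rewrite in_cons => /orP [/eqP->|hpin]; first by move=> hq; rewrite (hx q hq).
rewrite in_cons => /orP [/eqP->|hqin]; first by rewrite (hx p) ?orbT // in_cons hpin orbT.
exact: (IH y hp' p q hpin hqin).
Qed.

Lemma trav_comparable z l (T : seq ('I_z * 'I_l)) : traversal T ->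
  forall p q, p \in T -> q \in T -> le2 p q || le2 q p.
Proof.
case: T => // x T /and5P [_ _ hp _ _].
apply: comparable_path; apply: sub_path hp => a b /and3P [h1 h2 _].
by apply/andP; lia.
Qed.

End Gen.

Section B.
Variable R : realType.

Definition diagf n (i : nat) : 'I_n.+1 * 'I_n.+1 := (inord i, inord i).
Definition diag n := [seq diagf n i | i <- iota 0 n.+1].

Lemma diag_path n i m : (i + m <= n)%N ->
  path (@trav_step n.+1 n.+1) (diagf n i) [seq diagf n k | k <- iota i.+1 m].
Proof.
elim: m i => [|m IH] i h //=.
rewrite IH; last lia.
rewrite andbT /trav_step /diagf /= !inordK; try lia.
rewrite leqnn leqnSn /=.
apply/negP => /eqP [] /(congr1 val); rewrite /= !inordK; lia.
Qed.

Lemma last_iota i m : last i (iota i.+1 m) = (i + m)%N.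
Proof. by elim: m i => [|m IH] i /=; [rewrite addn0 | rewrite IH addSnnS]. Qed.

Lemma diag_trav n : traversal (diag n).
Proof.
rewrite /diag /= /diagf /= inordK // eqxx /=.
have := @diag_path n 0 n (leqnn n); rewrite /diagf => ->.
rewrite last_map last_iota /= add0n inordK //; lia.
Qed.

Lemma dF_diag d n (p q : curve R d n.+1) rho : 0 <= rho ->
  (forall j, eucl_dist (p j) (q j) <= rho) -> dF p q <= rho.
Proof.
move=> r0 h; apply: le_trans (dF_le p q (diag_trav n)) _.
apply: cost_le => // ij /mapP [i _ ->] /=; exact: h.
Qed.

Lemma coord_le d (a b : 'rV[R]_d) k :
  (a ord0 k - b ord0 k) ^+ 2 <= eucl_dist a b ^+ 2.
Proof.
rewrite /eucl_dist sqr_sqrtr; last by apply: sumr_ge0 => i _; apply: sqr_ge0.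
rewrite (bigD1 k) //= lerDl; apply: sumr_ge0 => i _; apply: sqr_ge0.
Qed.

End B.

Section C.

Definition codeset (N m : nat) (h : 'I_m -> nat) : {ffun 'I_(N + m) -> bool} :=
  [ffun k : 'I_(N + m) => [exists i : 'I_m, (k : nat) == (h i + i)%N]].

Definition ndecr m (h : 'I_m -> nat) := forall i j : 'I_m, (i <= j)%N -> (h i <= h j)%N.

Lemma codeset_step N m (h h' : 'I_m -> nat) (i : 'I_m) :
  ndecr h -> ndecr h' -> (h i <= N)%N ->
  codeset N h = codeset N h' ->
  (forall j : 'I_m, (j < i)%N -> h j = h' j) -> ~ (h i < h' i)%N.
Proof.
move=> nh nh' hb e IH hlt.
have hk : (h i + i < N + m)%N by have := ltn_ord i; lia.
have := congr1 (fun f : {ffun 'I_(N + m) -> bool} => f (Ordinal hk)) e; rewrite /codeset !ffunE /=.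
have -> : [exists i0, h i + i == h i0 + i0]%N by apply/existsP; exists i.
move/esym/existsP => [j /eqP hj].
case: (ltngtP j i) => hji.
- have := IH j hji; have := nh j i (ltnW hji); lia.
- have := nh' i j (ltnW hji); lia.
- have ej : j = i by apply: val_inj.
  move: hj; rewrite ej; lia.
Qed.

Lemma codeset_inj N m (h h' : 'I_m -> nat) :
  ndecr h -> ndecr h' -> (forall i, h i <= N)%N -> (forall i, h' i <= N)%N ->
  codeset N h = codeset N h' -> h =1 h'.
Proof.
move=> nh nh' b b' e.
suff H : forall k (i : 'I_m), (i < k)%N -> h i = h' i.
  by move=> i; apply: (H i.+1).
elim=> [|k IH] i hi //.
case: (ltnP i k) => hik; first exact: IH.
have ik : (i : nat) = k by lia.
have IH' : forall j : 'I_m, (j < i)%N -> h j = h' j by move=> j hj; apply: IH; lia.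
case: (ltngtP (h i) (h' i)) => // hc.
- by exfalso; apply: (codeset_step nh nh' (b i) e IH' hc).
- exfalso; apply: (codeset_step nh' nh (b' i) (esym e)) => //.
  by move=> j hj; rewrite IH'.
Qed.

Definition psum m (a : 'I_m -> nat) (k : 'I_m) := (\sum_(l < m | (l <= k)%N) a l)%N.

Lemma psum_ndecr m a : ndecr (@psum m a).
Proof.
move=> i j hij; rewrite /psum [X in (X <= _)%N]big_mkcond [X in (_ <= X)%N]big_mkcond.
apply: leq_sum => l _; case: ifP => // hl; rewrite ifT //; lia.
Qed.

Lemma psum_le m a k : (@psum m a k <= \sum_(l < m) a l)%N.
Proof.
rewrite /psum [X in (X <= _)%N]big_mkcond; apply: leq_sum => l _; case: ifP => //.
Qed.

Lemma psum_inj m (a a' : 'I_m -> nat) : psum a =1 psum a' -> a =1 a'.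
Proof.
move=> e.
suff H : forall k (i : 'I_m), (i < k)%N -> a i = a' i.
  by move=> i; apply: (H i.+1).
elim=> [|k IH] i hi //.
case: (ltnP i k) => hik; first exact: IH.
have ik : (i : nat) = k by lia.
have := e i; rewrite /psum (bigD1 i) //= [in X in _ = X -> _](bigD1 i) //=.
have -> : (\sum_(l < m | (l <= i)%N && (l != i)) a l =
           \sum_(l < m | (l <= i)%N && (l != i)) a' l)%N.
  apply: eq_bigr => l /andP [h1 h2]; apply: IH.
  have : (l : nat) != i by []. lia.
by move/addIn.
Qed.

End C.

Section Upper.
Variables (R : realType) (d n : nat) (x : curve R d n.+1) (r : R).

Definition MM := (6 * d)%N.
Definition ss : R := r / (2 * Num.sqrt d%:R).
Definition Par := (('I_n.+1 -> 'I_n.+1) * ('I_n.+1 -> 'I_d -> nat) * ('I_n.+1 -> 'I_d -> nat))%type.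
Definition center (p : Par) : curve R d n.+1 :=
  fun j => \row_k (x (p.1.1 j) ord0 k + ss * ((p.1.2 j k)%:R - (p.2 j k)%:R)).
Definition adm (p : Par) := ndecr (fun j => val (p.1.1 j)) /\
  forall j, (\sum_k p.1.2 j k <= MM)%N /\ (\sum_k p.2 j k <= MM)%N.
Definition Code := ({ffun 'I_(n.+1 + n.+1) -> bool} *
  {ffun 'I_n.+1 -> ({ffun 'I_(MM + d) -> bool} * {ffun 'I_(MM + d) -> bool})})%type.
Definition enc (p : Par) : Code :=
  (codeset n.+1 (fun j => val (p.1.1 j)),
   [ffun j => (codeset MM (psum (p.1.2 j)), codeset MM (psum (p.2 j)))]).

Lemma enc_inj p p' : adm p -> adm p' -> enc p = enc p' -> center p = center p'.
Proof.
case: p => [[f a] b]; case: p' => [[f' a'] b'] [nf ha] [nf' ha'] /= [e1 e2].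
have ef : forall j, f j = f' j.
  move=> j; apply: val_inj; apply: (codeset_inj nf nf' _ _ e1) => i /=;
  have := ltn_ord (f i); have := ltn_ord (f' i); lia.
have eab : forall j, a j =1 a' j /\ b j =1 b' j.
  move=> j; have := congr1 (fun F : {ffun 'I_n.+1 -> ({ffun 'I_(MM + d) -> bool} * {ffun 'I_(MM + d) -> bool})} => F j) e2.
  rewrite !ffunE => [[c1 c2]].
  split; apply: psum_inj.
  - apply: (codeset_inj (@psum_ndecr _ _) (@psum_ndecr _ _) _ _ c1) => i.
    + exact: leq_trans (psum_le _ _) (ha j).1.
    + exact: leq_trans (psum_le _ _) (ha' j).1.
  - apply: (codeset_inj (@psum_ndecr _ _) (@psum_ndecr _ _) _ _ c2) => i.
    + exact: leq_trans (psum_le _ _) (ha j).2.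
    + exact: leq_trans (psum_le _ _) (ha' j).2.
apply: boolp.funext => j; apply/rowP => k; rewrite !mxE /= ef (eab j).1 (eab j).2.
by [].
Qed.

Definition cs (c : Code) : curve R d n.+1 :=
  match boolp.pselect (exists p, adm p /\ enc p = c) with
  | left H => center (proj1_sig (boolp.cid H))
  | right _ => x
  end.

Lemma cs_enc p : adm p -> cs (enc p) = center p.
Proof.
move=> hp; rewrite /cs; case: boolp.pselect => [H|H]; last by exfalso; apply: H; exists p.
case: (boolp.cid H) => p' [hp' e] /=; exact: enc_inj.
Qed.

Lemma card_Code : #|{: Code}| = (2 ^ (n.+1 + n.+1) * (2 ^ (MM + d) * 2 ^ (MM + d)) ^ n.+1)%N.
Proof. by rewrite card_prod !card_ffun card_prod !card_ffun !card_bool !card_ord. Qed.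

End Upper.

Section Cover.
Variables (R : realType) (d n : nat) (x : curve R d n.+1) (r : R).

Lemma floor_abs_bound (u : R) : `|(Num.floor u)%:~R : R| <= u ^+ 2 / 4 + 2.
Proof.
have /andP [h1 h2] := floor_itv u.
set w : R := (Num.floor u)%:~R in h1 h2 *.
rewrite intrD /= in h2.
have q1 := sqr_ge0 (u / 2 - 1); have q2 := sqr_ge0 (u / 2 + 1).
have [hw|hw] := leP 0 w; [rewrite ger0_norm // | rewrite ltr0_norm //]; nra.
Qed.

Lemma cover (hd : (0 < d)%N) (hr : 0 < r) (y : curve R d n.+1) :
  dF x y <= r -> exists p, adm p /\ dF (center x r p) y <= r / 2.
Proof.
move=> hxy.
have [T [hT hc]] : exists T, traversal T /\ trav_cost x y T < 2 * r.
  apply: dF_lt; first by exists (diag n); exact: diag_trav.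
  lra.
pose f j := odflt j [pick i | (i, j) \in T].
have fT : forall j, (f j, j) \in T.
  move=> j; rewrite /f; case: pickP => //= H.
  have [i hi] := trav_cover2 hT j; by have := H i; rewrite hi.
have nf : ndecr (fun j => val (f j)).
  move=> i j hij; case: (ltngtP i j) => hc'.
  - have := trav_comparable hT (fT i) (fT j); rewrite /le2 /=.
    case/orP => /andP [h1 h2] //; lia.
  - lia.
  - by have -> : i = j by apply: val_inj.
have hdist : forall j, eucl_dist (x (f j)) (y j) < 2 * r.
  move=> j; exact: le_lt_trans (cost_ge x y (fT j)) hc.
have s0 : 0 < ss d r.
  rewrite /ss divr_gt0 // mulr_gt0 // sqrtr_gt0 ltr0n //.
pose u j k := (y j ord0 k - x (f j) ord0 k) / ss d r.
pose v j k := Num.floor (u j k).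
pose a j k := if (0 <= v j k) then `|v j k|%N else 0%N.
pose b j k := if (v j k < 0) then `|v j k|%N else 0%N.
have eab : forall j k, (a j k)%:R - (b j k)%:R = (v j k)%:~R :> R.
  move=> j k; rewrite /a /b; have [hv|hv] := leP 0 (v j k).
  - by rewrite subr0 natr_absz ger0_norm.
  - by rewrite sub0r natr_absz ltr0_norm // mulrNz opprK.
have habs : forall j k, (a j k + b j k)%N = `|v j k|%N.
  move=> j k; rewrite /a /b; have [hv|hv] := leP 0 (v j k).
  - by rewrite addn0.
  - by [].
have hsum : forall j, (\sum_k `|v j k| <= MM d)%N.
  move=> j.
  pose S := \sum_(k < d) (x (f j) ord0 k - y j ord0 k) ^+ 2.
  have S0 : 0 <= S by apply: sumr_ge0 => k _; apply: sqr_ge0.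
  have hS : S < 4 * r ^+ 2.
    have := hdist j; rewrite /eucl_dist -/S => h.
    have e : S = Num.sqrt S ^+ 2 by rewrite sqr_sqrtr.
    have := sqrtr_ge0 S; nra.
  have hu : \sum_k u j k ^+ 2 = S * (4 * d%:R) / r ^+ 2.
    rewrite /S mulr_suml mulr_suml; apply: eq_bigr => k _.
    rewrite /u /ss expr_div_n exprMn exprVn exprMn sqr_sqrtr ?ler0n //.
    have -> : (y j ord0 k - x (f j) ord0 k) ^+ 2 = (x (f j) ord0 k - y j ord0 k) ^+ 2.
      by rewrite -sqrrN opprB.
    have r0 : r != 0 by rewrite gt_eqF.
    have d0 : (d%:R : R) != 0 by rewrite pnatr_eq0 -lt0n.
    field; rewrite r0 d0 //.
  have hu2 : \sum_k u j k ^+ 2 < 16 * d%:R.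
    rewrite hu ltr_pdivrMr ?exprn_gt0 //.
    have hd' : (0 : R) < d%:R by rewrite ltr0n.
    nra.
  suff : ((\sum_k `|v j k|)%N%:R : R) < (MM d)%:R.
    by rewrite ltr_nat => /ltnW.
  rewrite natr_sum.
  apply: (@le_lt_trans _ _ (\sum_(k < d) (u j k ^+ 2 / 4 + 2))).
    apply: ler_sum => k _; rewrite natr_absz intr_norm; exact: floor_abs_bound.
  rewrite big_split /= -mulr_suml sumr_const card_ord /MM natrM.
  have hd' : (0 : R) < d%:R by rewrite ltr0n.
  rewrite -mulr_natr; lra.
pose p : Par d n := (f, a, b).
exists p; split.
  split => // j; split.
  - apply: leq_trans (hsum j); apply: leq_sum => k _; rewrite -habs; exact: leq_addr.
  - apply: leq_trans (hsum j); apply: leq_sum => k _; rewrite -habs; exact: leq_addl.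
apply: dF_diag; first lra.
move=> j; rewrite /eucl_dist.
have -> : r / 2 = Num.sqrt ((r / 2) ^+ 2) by rewrite sqrtr_sqr ger0_norm //; lra.
rewrite ler_sqrt; last exact: sqr_ge0.
apply: (@le_trans _ _ (\sum_(k < d) ss d r ^+ 2)).
  apply: ler_sum => k _; rewrite /center /p /= !mxE eab.
  have /andP [h1 h2] := floor_itv (u j k).
  rewrite intrD /= in h2.
  have eu : y j ord0 k = x (f j) ord0 k + ss d r * u j k.
    by rewrite /u mulrC divfK ?gt_eqF // addrC subrK.
  rewrite eu.
  set U := u j k in h1 h2 eu *; set w : R := (v j k)%:~R in h1 h2 *.
  set s := ss d r in s0 eu *.
  have e1 : 0 <= 1 - (U - w) ^+ 2 by nra.
  have := mulr_ge0 (sqr_ge0 s) e1.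
  have -> : x (f j) ord0 k + s * w - (x (f j) ord0 k + s * U) = s * (w - U) by ring.
  nra.
rewrite sumr_const card_ord /ss expr_div_n exprMn sqr_sqrtr ?ler0n //.
have d0 : (d%:R : R) != 0 by rewrite pnatr_eq0 -lt0n.
rewrite -mulr_natr.
rewrite le_eqVlt; apply/orP; left; apply/eqP.
by field.
Qed.
End Cover.

Lemma upper (R : realType) d n : (0 < d)%N ->
  doubling_with (@dF R d n.+1 n.+1) (16 * (d * n.+1)%:R).
Proof.
move=> hd x r hr.
exists #|{: Code d n}|, (fun i => cs x r (enum_val i)); split.
- have hc : (#|{: Code d n}| <= 2 ^ (16 * (d * n.+1)))%N.
    rewrite card_Code -expnD -expnM -expnD leq_exp2l // /MM; nia.
  apply: (@le_trans _ _ ((2 ^ (16 * (d * n.+1)))%:R)); first by rewrite ler_nat.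
  by rewrite natrX -powR_mulrn ?ler0n // natrM.
- move=> y hy; have [p [hp hdp]] := cover hd hr hy.
  by exists (enum_rank (enc p)); rewrite enum_rankK cs_enc.
Qed.

Lemma iter_cover (R : realType) (X : Type) (dist : X -> X -> R) t :
  doubling_with dist t -> forall k x r, 0 < r ->
  exists (F : finType) (c : F -> X), (#|{: F}|%:R <= (2 `^ t) ^+ k) /\
    forall y, dist x y <= r -> exists i, dist (c i) y <= r / 2 ^+ k.
Proof.
move=> hdb; elim=> [|k IH] x r hr.
  exists 'I_1, (fun _ => x); split; first by rewrite card_ord expr0.
  by move=> y hy; exists ord0; rewrite expr0 divr1.
have [F [c [hF hc]]] := IH x r hr.
have hrk : 0 < r / 2 ^+ k by rewrite divr_gt0 // exprn_gt0.
have H' : forall i : F, exists g : {m : nat & 'I_m -> X}, (projT1 g)%:R <= 2 `^ t /\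
    forall y, dist (c i) y <= r / 2 ^+ k -> exists j, dist (projT2 g j) y <= r / 2 ^+ k / 2.
  move=> i; have [m [cs [h1 h2]]] := hdb (c i) _ hrk; by exists (existT _ m cs).
have [g hg] := boolp.choice H'.
exists {i : F & 'I_(projT1 (g i))}, (fun w => projT2 (g (tag w)) (tagged w)); split.
- rewrite card_tagged sumnE big_map big_enum /= natr_sum.
  apply: (@le_trans _ _ (\sum_(i : F) 2 `^ t)).
    apply: ler_sum => i _; rewrite card_ord; exact: (hg i).1.
  rewrite sumr_const (exprSr (2 `^ t) k); set P := _ `^ t; rewrite -mulr_natl; apply: ler_wpM2r; [exact: powR_ge0 | exact: hF].
- move=> y hy; have [i hi] := hc y hy; have [j hj] := (hg i).2 y hi.
  exists (existT _ i j) => /=.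
  by rewrite exprSr invfM mulrA.
Qed.

Section Lower.
Variables (R : realType) (d n : nat).

Definition mm := (2 ^ (d + 2))%N.
Definition kk := (2 * d + 4)%N.
Definition rho : R := (2 ^+ kk)^-1.
Definition delta : R := (2 ^+ (2 * d + 2))^-1.
Definition xb : curve R d n.+1 :=
  fun j => \row_k (if (k : nat) == 0%N then 3 * (j : nat)%:R else 0).
Definition yv (phi : {ffun 'I_n.+1 * 'I_d -> 'I_mm}) : curve R d n.+1 :=
  fun j => \row_k (xb j ord0 k + delta * (phi (j, k) : nat)%:R).

Lemma rho_gt0 : 0 < rho.
Proof. by rewrite /rho invr_gt0 exprn_gt0. Qed.

Lemma delta_rho : delta = 4 * rho.
Proof.
have e : (2:R) ^+ kk = 2 ^+ (2 * d + 2) * 4.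
  rewrite /kk (_ : (2 * d + 4 = (2 * d + 2) + 2)%N); last lia.
  by rewrite exprD expr2 -natrM.
have h : (2 : R) ^+ (2 * d + 2) != 0 by apply: expf_neq0; rewrite pnatr_eq0.
rewrite /delta /rho e; move: h; set X := (2 : R) ^+ _ => h; field; by rewrite h.
Qed.

Lemma inv2_bounds e : 0 < ((2 : R) ^+ e)^-1 <= 1.
Proof.
have h2 : (0:R) < 2 ^+ e by rewrite exprn_gt0.
rewrite invr_gt0 h2 /= invf_le1 //; apply: exprn_ege1; by rewrite ler1n.
Qed.

Lemma dphi_bound (ph : 'I_mm) : 0 <= delta * (ph : nat)%:R <= ((2 : R) ^+ d)^-1.
Proof.
have dpos : 0 <= delta by have /andP [h _] := inv2_bounds (2 * d + 2); exact: ltW.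
apply/andP; split; first by apply: mulr_ge0.
have hph : ((ph : nat)%:R : R) <= 2 ^+ (d + 2).
  by rewrite -natrX ler_nat /mm ltnW.
apply: le_trans (ler_wpM2l dpos hph) _.
have e : (2 : R) ^+ (2 * d + 2) = 2 ^+ d * 2 ^+ (d + 2).
  by rewrite -exprD; congr (_ ^+ _); lia.
have h1 : (2 : R) ^+ d != 0 by apply: expf_neq0; rewrite pnatr_eq0.
have h2 : (2 : R) ^+ (d + 2) != 0 by apply: expf_neq0; rewrite pnatr_eq0.
rewrite /delta e le_eqVlt; apply/orP; left; apply/eqP.
move: h1 h2; set A := (2 : R) ^+ d; set B := (2 : R) ^+ (d + 2) => h1 h2.
by field; rewrite h1 h2.
Qed.

Lemma xy_dist phi j : eucl_dist (xb j) (yv phi j) <= 1.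
Proof.
rewrite /eucl_dist -sqrtr1 ler_sqrt //.
set e := ((2 : R) ^+ d)^-1.
have he := inv2_bounds d; rewrite -/e in he.
apply: (@le_trans _ _ (\sum_(k < d) e ^+ 2)).
  apply: ler_sum => k _; rewrite /yv !mxE.
  have /andP [h1 h2] := dphi_bound (phi (j, k)).
  by rewrite opprD addrA subrr add0r sqrrN !expr2; apply: ler_pM.
rewrite sumr_const card_ord -mulr_natr.
have hd2 : (d%:R : R) <= 2 ^+ d * 2 ^+ d.
  apply: (@le_trans _ _ (2 ^+ d)).
    by rewrite -natrX ler_nat ltnW // ltn_expl.
  have hp : (0 : R) < 2 ^+ d by rewrite exprn_gt0.
  by rewrite -{1}[2 ^+ d]mulr1 ler_pM2l // exprn_ege1 // ler1n.
have hp : (0 : R) < 2 ^+ d by rewrite exprn_gt0.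
by rewrite /e expr2 -invfM mulrC ler_pdivrMr ?mulr_gt0 // mul1r.
Qed.

Lemma coord_lt (a b : 'rV[R]_d) q e : eucl_dist a b < e ->
  - e < a ord0 q - b ord0 q < e.
Proof.
move=> h; have := coord_le a b q; have := sqrtr_ge0 (\sum_(k < d) (a ord0 k - b ord0 k) ^+ 2).
rewrite -/(eucl_dist a b) => h0 h1.
move: h h0 h1; set D := eucl_dist a b; set w := a ord0 q - b ord0 q => h h0 h1.
apply/andP; split; nra.
Qed.


Lemma sep (hd : (0 < d)%N) (c : curve R d n.+1) phi phi' :
  dF c (yv phi) <= rho -> dF c (yv phi') <= rho -> phi = phi'.
Proof.
move=> h1 h2.
have ex : exists T : seq ('I_n.+1 * 'I_n.+1), traversal T.
  by exists (diag n); exact: diag_trav.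
have r0 := rho_gt0.
have l1 : dF c (yv phi) < 2 * rho by lra.
have l2 : dF c (yv phi') < 2 * rho by lra.
have [T [hT hc]] := dF_lt ex l1.
have [T' [hT' hc']] := dF_lt ex l2.
apply/ffunP => [[j q]]; apply: val_inj; apply/eqP; apply/negPn/negP => hne.
have [i hi] := trav_cover2 hT j.
have [j2 hj2] := trav_cover1 hT' i.
have d1 := le_lt_trans (cost_ge _ _ hi) hc.
have d2 := le_lt_trans (cost_ge _ _ hj2) hc'.
have dr := delta_rho.
have dpos : 0 < delta by rewrite dr; lra.
case: (eqVneq j2 j) => [ej|nej].
- subst j2.
  have := coord_lt q d1; have := coord_lt q d2; rewrite /yv !mxE /=.
  set X := xb j ord0 q; set A := ((phi (j, q) : nat)%:R : R); set B := ((phi' (j, q) : nat)%:R : R).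
  have [hab|hab] : A + 1 <= B \/ B + 1 <= A.
    case: (ltngtP (phi (j, q)) (phi' (j, q))) => h.
    - by left; rewrite /A /B natr1 ler_nat.
    - by right; rewrite /A /B natr1 ler_nat.
    - by exfalso; move/eqP: hne; apply; exact: h.
  + have := ler_wpM2l (ltW dpos) hab; rewrite mulrDr mulr1 => hm.
    move=> /andP [h3 h4] /andP [h5 h6]; lra.
  + have := ler_wpM2l (ltW dpos) hab; rewrite mulrDr mulr1 => hm.
    move=> /andP [h3 h4] /andP [h5 h6]; lra.
- pose q0 : 'I_d := Ordinal hd.
  have := coord_lt q0 d1; have := coord_lt q0 d2; rewrite /yv /xb !mxE /=.
  have /andP [p1 p2] := dphi_bound (phi (j, q0)).
  have /andP [p3 p4] := dphi_bound (phi' (j2, q0)).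
  have /andP [_ e1] := inv2_bounds d.
  have /andP [_ e2] := inv2_bounds (2 * d + 2).
  rewrite -/delta in e2.
  set A := delta * _ in p1 p2 *; set B := delta * _ in p3 p4 *.
  set J := ((j : nat)%:R : R); set J2 := ((j2 : nat)%:R : R).
  have [hab|hab] : J + 1 <= J2 \/ J2 + 1 <= J.
    case: (ltngtP j j2) => h.
    - by left; rewrite /J /J2 natr1 ler_nat.
    - by right; rewrite /J /J2 natr1 ler_nat.
    - by move: nej; rewrite (val_inj h) eqxx.
  + move=> /andP [h3 h4] /andP [h5 h6]; lra.
  + move=> /andP [h3 h4] /andP [h5 h6]; lra.
Qed.

End Lower.

Lemma lower (R : realType) d n t : (0 < d)%N -> 0 <= t ->
  doubling_with (@dF R d n.+1 n.+1) t -> 1 / 2 * (d * n.+1)%:R <= t.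
Proof.
move=> hd t0 hdb.
have [F [c [hF hc]]] := iter_cover hdb (kk d) (@xb R d n) ltr01.
have H : forall phi : {ffun 'I_n.+1 * 'I_d -> 'I_(mm d)},
    exists i, dF (c i) (@yv R d n phi) <= rho R d.
  move=> phi.
  have hx : dF (@xb R d n) (@yv R d n phi) <= 1.
    by apply: dF_diag => // j; apply: xy_dist.
  have [i hi] := hc _ hx; exists i; by rewrite /rho -div1r.
have [idx hidx] := boolp.choice H.
have inj : injective idx.
  move=> p p' e; apply: (@sep R d n hd (c (idx p))); first exact: hidx.
  rewrite e; exact: hidx.
have := leq_card idx inj.
rewrite card_ffun card_prod !card_ord /mm -expnM => hle.
have : ((2 ^ ((d + 2) * (n.+1 * d)))%:R : R) <= (2 `^ t) ^+ (kk d).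
  apply: le_trans hF; by rewrite ler_nat.
rewrite natrX -powR_mulrn // -powR_mulrn ?powR_ge0 // -powRrM.
rewrite -ler_ln ?posrE ?powR_gt0 // !ln_powR ler_pM2r ?ln_gt0 ?ltr1n //.
have -> : (((d + 2) * (n.+1 * d))%N%:R : R) = (d + 2)%N%:R * (d * n.+1)%N%:R.
  by rewrite -natrM; congr (_%:R); lia.
have -> : ((kk d)%:R : R) = 2 * (d + 2)%N%:R by rewrite -natrM /kk; congr (_%:R); lia.
have hD : (0 : R) < (d + 2)%N%:R by rewrite ltr0n addn2.
move=> h; nra.
Qed.

Unset Implicit Arguments.

Theorem proposition9p1 (R : realType) :
  exists c1 c2 : R, 0 < c1 /\ 0 < c2 /\
    forall d z : nat, (0 < d)%N -> (0 < z)%N ->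
      doubling_with (@dF R d z z) (c2 * (d * z)%:R) /\
      (forall t : R, 0 <= t -> doubling_with (@dF R d z z) t ->
         c1 * (d * z)%:R <= t).
Proof.
exists (1 / 2), 16; split; first lra; split; first lra.
move=> d [//|n] hd _; split; first exact: upper.
by move=> t t0; apply: lower.
Qed.
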